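(* Let $X$ be a set, $T:X\to X$ a map, and $G$ a finite group acting on $X$ such that $g\circ T=T\circ g$ for all $g\in G$. Let $x\in X$ be a periodic point of $T$ and let $k\in\mathbb{N}$. Then the orbit $\mathfrak{O}_T(x)$ shortens in length by a factor of $\frac{1}{k}$ if and only if $|\mathfrak{O}_T(x)\cap\mathfrak{O}_G(x)|=k$. Moreover, if $\mathfrak{O}_T(x)$ shortens in length by a factor of $\frac1k$, then there exists $g\in G$ such that $\mathfrak{O}_T(x)\cap\mathfrak{O}_G(x)=\{g^i(x): i\in\mathbb{N}_0\}$.
   Context: For $x\in X$, $\mathfrak{O}_T(x)=\{T^j(x): j\geqslant 0\}$ is the (closed, i.e. finite) orbit of $x$ under $T$, and $\mathfrak{O}_G(x)=\{g(x):g\in G\}$ is the orbit of $x$ under $G$. Let $X'=G\backslash X=\{\mathfrak{O}_G(x):x\in X\}$, $\pi:X\to X'$, $\pi(x)=\mathfrak{O}_G(x)$, and let $T':X'\to X'$ be the induced map $T'(\mathfrak{O}_G(x))=\mathfrak{O}_G(T(x))$ (well defined since the action commutes with $T$). The orbit $\mathfrak{O}_T(x)$ of a periodic point $x$ ''shortens in length by a factor of $\frac1k$'' means $|\mathfrak{O}_{T'}(\pi(x))|=\frac{1}{k}|\mathfrak{O}_T(x)|$. *)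

(* Defs.v *)
From HB Require Import structures.
From mathcomp Require Import all_boot all_order all_fingroup.
From mathcomp Require Import boolp classical_sets functions cardinality.
Set Implicit Arguments. Unset Strict Implicit. Unset Printing Implicit Defensive.

Local Open Scope classical_set_scope.

Definition is_left_action (gT : finGroupType) (X : Type) (act : gT -> X -> X) :=
  (forall x, act 1%g x = x) /\ (forall g h x, act (g * h)%g x = act g (act h x)).

Definition periodic_pt (X : Type) (T : X -> X) (x : X) :=
  exists n, (0 < n)%N /\ iter n T x = x.

Definition Torbit (X : Type) (T : X -> X) (x : X) : set X :=
  range (fun j : nat => iter j T x).

(* O_G(x) = { g(x) : g in G } ; this is also pi(x), the point of X' = G\X *)
Definition Gorbit (gT : finGroupType) (X : Type) (act : gT -> X -> X) (x : X) : set X :=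
  range (fun g : gT => act g x).

(* The induced map T' on G-orbits: T'(O_G(a)) = O_G(T a).  For A a G-orbit,
   T' A is the G-orbit of T a for any a in A (well defined by commutation). *)
Definition Tquot (gT : finGroupType) (X : Type) (act : gT -> X -> X) (T : X -> X)
  (A : set X) : set X :=
  [set y | exists a, A a /\ Gorbit act (T a) y].

Definition Tquot_orbit (gT : finGroupType) (X : Type) (act : gT -> X -> X) (T : X -> X)
  (x : X) : set (set X) :=
  range (fun j : nat => iter j (Tquot act T) (Gorbit act x)).

(* O_T(x) shortens in length by a factor 1/k :  |O_{T'}(pi x)| = (1/k) |O_T(x)|,
   stated multiplicatively: |O_T(x)| = k * |O_{T'}(pi x)|. *)
Definition shortens_by (gT : finGroupType) (X : Type) (act : gT -> X -> X) (T : X -> X)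
  (x : X) (k : nat) :=
  exists n m, (Torbit T x #= `I_n)%card /\ (Tquot_orbit act T x #= `I_m)%card /\ n = (k * m)%N.

(* Main.v *)
Require Import Defs.
From HB Require Import structures.
From mathcomp Require Import all_boot all_order all_fingroup.
From mathcomp Require Import boolp classical_sets functions cardinality.
From mathcomp Require Import zify.

Local Open Scope classical_set_scope.

Lemma act_iterC (X : Type) (T : X -> X) (gT : finGroupType) (act : gT -> X -> X)
  (hcomm : forall (g : gT) (y : X), act g (T y) = T (act g y)) n g y :
  act g (iter n T y) = iter n T (act g y).
Proof. by elim: n => //= n IH; rewrite hcomm IH. Qed.

Lemma actVK (X : Type) (gT : finGroupType) (act : gT -> X -> X)
  (hact : is_left_action act) (g : gT) y : act (g^-1)%g (act g y) = y.
Proof. by case: hact => h1 hM; rewrite -hM mulVg h1. Qed.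

Lemma Gorbit_act (X : Type) (gT : finGroupType) (act : gT -> X -> X)
  (hact : is_left_action act) (g : gT) y : Gorbit act (act g y) = Gorbit act y.
Proof.
case: hact => h1 hM.
apply/seteqP; split => z /= [h _ <-].
  by exists (h * g)%g => //; rewrite hM.
exists (h * (g^-1))%g => //; rewrite hM; congr (act h _).
by rewrite -hM mulVg h1.
Qed.

Arguments act_iterC {X T gT act} hcomm n g y.
Arguments actVK {X gT act} hact g y.
Arguments Gorbit_act {X gT act} hact g y.

Lemma Tquot_G (X : Type) (T : X -> X) (gT : finGroupType) (act : gT -> X -> X)
  (hact : is_left_action act)
  (hcomm : forall (g : gT) (y : X), act g (T y) = T (act g y)) y :
  Tquot act T (Gorbit act y) = Gorbit act (T y).
Proof.
apply/seteqP; split => z /=.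
  move=> [a [[g _ <-]]]; by rewrite -hcomm (Gorbit_act hact).
move=> hz; exists y; split => //; exists 1%g => //; by case: hact.
Qed.

Arguments Tquot_G {X T gT act} hact hcomm y.

Theorem lemma4 (X : Type) (T : X -> X) (gT : finGroupType) (act : gT -> X -> X)
  (hact : is_left_action act)
  (hcomm : forall (g : gT) (y : X), act g (T y) = T (act g y))
  (x : X) (hx : periodic_pt T x) (k : nat) :
  (shortens_by act T x k <-> (Torbit T x `&` Gorbit act x #= `I_k)%card) /\
  (shortens_by act T x k ->
     exists g : gT, Torbit T x `&` Gorbit act x = range (fun i : nat => act (g ^+ i)%g x)).
Proof.
have [h1 hM] := hact.
pose P := fun n => `[< (0 < n)%N /\ iter n T x = x >].
have exP : exists n, P n by case: hx => n hn; exists n; apply/asboolP.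
case: (ex_minnP exP) => p /asboolP [p0 hp] pmin.
have pmin' : forall j, (0 < j)%N -> (j < p)%N -> iter j T x <> x.
  move=> j j0 jp hj; have := pmin j (asboolT (conj j0 hj)).
  by rewrite leqNgt jp.
have iterMp : forall a, iter (a * p) T x = x.
  by elim=> [|a IH] //; rewrite mulSn iterD IH hp.
have per_mod : forall j, iter j T x = iter (j %% p) T x.
  by move=> j; rewrite {1}(divn_eq j p) addnC iterD iterMp.
have Tinj : forall i j, (i < p)%N -> (j < p)%N -> iter i T x = iter j T x -> i = j.
  have H : forall i j, (i < j)%N -> (j < p)%N -> iter i T x = iter j T x -> False.
    move=> i j ij jp e.
    have := congr1 (iter (p - j) T) e; rewrite -!iterD.
    have -> : (p - j + j = p)%N by lia.
    rewrite hp; apply: pmin'; lia.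
  move=> i j ip jp e; case: (ltngtP i j) => // ij.
    by case: (H i j).
  by case: (H j i).
have back : forall i j h, (i <= j)%N -> (i < p)%N ->
    iter j T x = act h (iter i T x) -> iter (j - i) T x = act h x.
  move=> i j h ij ip e.
  have := congr1 (iter (p - i) T) e.
  rewrite -(act_iterC hcomm) -!iterD.
  have -> : (p - i + i = p)%N by lia.
  have -> : (p - i + j = (j - i) + p)%N by lia.
  by rewrite iterD hp.
pose Q := fun n => `[< (0 < n)%N /\ exists g, iter n T x = act g x >].
have exQ : exists n, Q n.
  exists p; apply/asboolP; split; first exact: p0.
  by exists 1%g; rewrite h1.
case: (ex_minnP exQ) => q /asboolP [q0 [g0 hq]] qmin.
have qmin' : forall j g, (0 < j)%N -> (j < q)%N -> iter j T x <> act g x.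
  move=> j g j0 jq hj; have := qmin j (asboolT (conj j0 (ex_intro _ g hj))).
  by rewrite leqNgt jq.
have powq : forall m, iter (m * q) T x = act (g0 ^+ m)%g x.
  elim=> [|m IH]; first by rewrite h1.
  by rewrite mulSn iterD IH -(act_iterC hcomm) hq -hM -expgSr.
have F6 : forall j h, iter j T x = act h x -> (q %| j)%N.
  move=> j h e; rewrite /dvdn; apply/negPn/negP => r0.
  move: e; rewrite {1}(divn_eq j q) addnC iterD powq -(act_iterC hcomm) => e.
  apply: (qmin' (j %% q) ((g0 ^+ (j %/ q))^-1 * h)%g); rewrite ?lt0n ?ltn_pmod //.
  by rewrite hM -e (actVK hact).
have qp : (q %| p)%N by apply: (F6 _ 1%g); rewrite h1.
have qlep : (q <= p)%N by apply: dvdn_leq.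
have cardT : (Torbit T x #= `I_p)%card.
  have -> : Torbit T x = (fun j => iter j T x) @` `I_p.
    apply/seteqP; split => y /= [j Hj <-].
      by exists (j %% p); [rewrite /= ltn_pmod | rewrite -per_mod].
    by exists j.
  apply: inj_card_eq => i j; rewrite !in_setE /=; exact: Tinj.
have iterTq : forall j, iter j (Tquot act T) (Gorbit act x) = Gorbit act (iter j T x).
  by elim=> [|j IH] //=; rewrite IH (Tquot_G hact hcomm).
have cardTq : (Tquot_orbit act T x #= `I_q)%card.
  have -> : Tquot_orbit act T x = (fun j => Gorbit act (iter j T x)) @` `I_q.
    apply/seteqP; split => y /= [j Hj <-].
      exists (j %% q); first by rewrite /= ltn_pmod.
      rewrite iterTq {2}(divn_eq j q) addnC iterD powq -(act_iterC hcomm).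
      by rewrite (Gorbit_act hact).
    by exists j => //; rewrite iterTq.
  apply: inj_card_eq => i j; rewrite !in_setE /= => iq jq e.
  have H : forall i j, (i < j)%N -> (j < q)%N ->
      Gorbit act (iter i T x) = Gorbit act (iter j T x) -> False.
    move=> i' j' ij jq' e'.
    have : Gorbit act (iter i' T x) (iter j' T x) by rewrite e'; exists 1%g.
    case=> h _ eh.
    have := back i' j' h (ltnW ij) (leq_trans (ltn_trans ij jq') qlep) (esym eh).
    apply: qmin'; rewrite ?subn_gt0 //.
    by apply: leq_ltn_trans jq'; apply: leq_subr.
  case: (ltngtP i j) => // ij.
    by case: (H i j).
  by case: (H j i).
have inter : Torbit T x `&` Gorbit act x = (fun i => iter (i * q) T x) @` `I_(p %/ q).
  apply/seteqP; split => y /=.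
    move=> [[j _ <-] [h _ eh]].
    have dj : (q %| j %% p)%N.
      by move: (F6 _ h (esym eh)); rewrite {1}(divn_eq j p) dvdn_addr ?dvdn_mull.
    exists (j %% p %/ q); last by rewrite divnK // -per_mod.
    rewrite /= ltn_divRL // divnK //; exact: ltn_pmod.
  move=> [i _ <-]; split; first by exists (i * q).
  by rewrite powq; exists (g0 ^+ i)%g.
have cardI : (Torbit T x `&` Gorbit act x #= `I_(p %/ q))%card.
  rewrite inter; apply: inj_card_eq => i j; rewrite !in_setE /= => ip jp e.
  have : (i * q = j * q)%N.
    apply: Tinj e; by rewrite -ltn_divRL.
  by move/eqP; rewrite eqn_mul2r eqn0Ngt q0 => /eqP.
have shortE : shortens_by act T x k <-> k = (p %/ q)%N.
  split.
    move=> [n [m [hn [hm e]]]].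
    have np : n = p by apply/card_eq_II; apply: card_eq_trans cardT; apply: card_esym.
    have mq : m = q by apply/card_eq_II; apply: card_eq_trans cardTq; apply: card_esym.
    by rewrite np mq in e; rewrite e mulnK.
  move=> ->; exists p, q; split => //; split => //; by rewrite divnK.
split.
  rewrite shortE; split; first by move=> ->.
  move=> hk; apply/card_eq_II; apply: card_eq_trans cardI; exact: card_esym.
move=> _; exists g0; rewrite inter.
apply/seteqP; split => y /=.
  by move=> [i _ <-]; exists i => //; rewrite powq.
move=> [i _ <-]; rewrite -powq per_mod.
have dj : (q %| i * q %% p)%N.
  by move: (dvdn_mull i (dvdnn q)); rewrite {1}(divn_eq (i * q) p) dvdn_addr ?dvdn_mull.
exists (i * q %% p %/ q); last by rewrite divnK.
rewrite /= ltn_divRL // divnK //; exact: ltn_pmod.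
Qed.
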